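(* Let $R$ be a Hilbert ring and let $R \to S$ be intersection flat for ideals. If $S/\mathfrak{m}S$ is zero or a domain for every maximal ideal $\mathfrak{m}$ of $R$, then $R \to S$ has the prime extension property.
   Context: All rings are commutative with identity. A Hilbert ring is a ring in which every prime ideal is an intersection of maximal ideals. A ring homomorphism $R\to S$ is intersection flat for ideals if $S$ is flat over $R$ and for every family $\{I_\lambda\}$ of ideals of $R$, $\left(\bigcap_\lambda I_\lambda\right)S = \bigcap_\lambda (I_\lambda S)$. $R \to S$ has the prime extension property if for every prime ideal $P$ of $R$, $PS$ is prime in $S$ or $PS = S$. *)

(* Defs.v *)
From HB Require Import structures.
From mathcomp Require Import all_boot all_order all_algebra.
Set Implicit Arguments. Unset Strict Implicit. Unset Printing Implicit Defensive.
Import GRing.Theory.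
Local Open Scope ring_scope.

Definition ideal (R : comPzRingType) (I : R -> Prop) : Prop :=
  [/\ I 0, (forall x y, I x -> I y -> I (x + y)) & (forall r x, I x -> I (r * x))].

Definition prime_ideal (R : comPzRingType) (P : R -> Prop) : Prop :=
  [/\ ideal P, ~ P 1 & (forall a b, P (a * b) -> P a \/ P b)].

Definition maximal_ideal (R : comPzRingType) (M : R -> Prop) : Prop :=
  [/\ ideal M, ~ M 1 &
      (forall J : R -> Prop, ideal J -> (forall x, M x -> J x) ->
         (forall x, J x -> M x) \/ J 1)].

Definition hilbert_ring (R : comPzRingType) : Prop :=
  forall P : R -> Prop, prime_ideal P ->
    forall x, P x <-> (forall M, maximal_ideal M -> (forall y, P y -> M y) -> M x).

Definition ext_ideal (R S : comPzRingType) (f : {rmorphism R -> S})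
  (I : R -> Prop) : S -> Prop :=
  fun s => exists n (a : 'I_n -> R) (t : 'I_n -> S),
    (forall i, I (a i)) /\ s = \sum_(i < n) f (a i) * t i.

(* Flatness of S over R (via f), stated by the equational criterion
   (every R-linear relation in S is trivial). *)
Definition flat_hom (R S : comPzRingType) (f : {rmorphism R -> S}) : Prop :=
  forall n (r : 'I_n -> R) (x : 'I_n -> S),
    \sum_(i < n) f (r i) * x i = 0 ->
    exists m (a : 'I_n -> 'I_m -> R) (y : 'I_m -> S),
      (forall i, x i = \sum_(j < m) f (a i j) * y j) /\
      (forall j, \sum_(i < n) r i * a i j = 0).

Definition intersection_flat_for_ideals (R S : comPzRingType)
  (f : {rmorphism R -> S}) : Prop :=
  flat_hom f /\
  forall (L : Type) (I : L -> R -> Prop), (forall l, ideal (I l)) ->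
    forall s, ext_ideal f (fun x => forall l, I l x) s <->
              (forall l, ext_ideal f (I l) s).

Definition prime_extension_property (R S : comPzRingType)
  (f : {rmorphism R -> S}) : Prop :=
  forall P : R -> Prop, prime_ideal P ->
    prime_ideal (ext_ideal f P) \/ ext_ideal f P 1.

(* Main.v *)
Require Import Defs.
From HB Require Import structures.
From mathcomp Require Import all_boot all_order all_algebra.
From Stdlib Require Import Classical.
Set Implicit Arguments. Unset Strict Implicit. Unset Printing Implicit Defensive.
Import GRing.Theory.
Local Open Scope ring_scope.

Section Aux.
Variables (R S : comPzRingType) (f : {rmorphism R -> S}).

Lemma ext0 (I : R -> Prop) : ext_ideal f I 0.
Proof.
exists 0%N, (fun _ => 0), (fun _ => 0); split; first by case.
by rewrite big_ord0.
Qed.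

Lemma extD (I : R -> Prop) x y :
  ext_ideal f I x -> ext_ideal f I y -> ext_ideal f I (x + y).
Proof.
move=> [n1 [a1 [t1 [H1 ->]]]] [n2 [a2 [t2 [H2 ->]]]].
exists (n1 + n2)%N,
  (fun i => match split i with inl j => a1 j | inr k => a2 k end),
  (fun i => match split i with inl j => t1 j | inr k => t2 k end).
split.
  by move=> i; case: (split i).
rewrite big_split_ord /=; congr (_ + _); apply: eq_bigr => i _.
  by rewrite (unsplitK (inl _ i)).
by rewrite (unsplitK (inr _ i)).
Qed.

Lemma extM (I : R -> Prop) r x : ext_ideal f I x -> ext_ideal f I (r * x).
Proof.
move=> [n [a [t [H ->]]]].
exists n, a, (fun i => r * t i); split => //.
rewrite mulr_sumr; apply: eq_bigr => i _.
by rewrite mulrCA.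
Qed.

Lemma ext_ideal_ideal (I : R -> Prop) : ideal (ext_ideal f I).
Proof. by split; [apply: ext0 | apply: extD | apply: extM]. Qed.

Lemma ext_mono (I J : R -> Prop) : (forall x, I x -> J x) ->
  forall s, ext_ideal f I s -> ext_ideal f J s.
Proof.
move=> IJ s [n [a [t [H ->]]]]; exists n, a, t; split => // i; exact: IJ.
Qed.

End Aux.

(* S/mS is zero  <->  mS contains 1;  S/mS is a domain  <->  mS is prime. *)
Theorem proposition5p9 (R S : comPzRingType) (f : {rmorphism R -> S}) :
  hilbert_ring R ->
  intersection_flat_for_ideals f ->
  (forall m : R -> Prop, maximal_ideal m ->
     ext_ideal f m 1%R \/ prime_ideal (ext_ideal f m)) ->
  prime_extension_property f.
Proof.
move=> hR [_ hI] hm P PP.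
case: (classic (ext_ideal f P 1)) => [|n1]; [by right | left].
split => //; first exact: ext_ideal_ideal.
move=> a b hab.
have key : forall M, maximal_ideal M -> (forall y, P y -> M y) ->
    ext_ideal f M a \/ ext_ideal f M b.
  move=> M MM PM.
  have habM := ext_mono PM hab.
  case: (hm M MM) => [h1|[_ _ pr]].
    by left; rewrite -[a]mulr1; apply: extM.
  exact: pr.
pose Set_ (c : S) := fun M : R -> Prop =>
  maximal_ideal M /\ (forall y, P y -> M y) /\ ext_ideal f M c.
pose Int (c : S) := fun x : R => forall l : {M | Set_ c M}, sval l x.
have inInt : forall c, ext_ideal f (Int c) c.
  move=> c.
  have := proj2 (hI {M | Set_ c M} (fun l => sval l) _ c).
  apply.
    by move=> l; case: (proj1 (svalP l)).
  by move=> l; case: (svalP l) => _ [].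
have [hA|hB] : (forall x, Int a x -> P x) \/ (forall y, Int b y -> P y).
  apply: NNPP => hn.
  move/not_or_and: hn => [hA hB].
  have [x hx] := not_all_ex_not _ _ hA.
  have [y hy] := not_all_ex_not _ _ hB.
  have [Ix nPx] := imply_to_and _ _ hx.
  have [Iy nPy] := imply_to_and _ _ hy.
  have [_ _ pr] := PP.
  have: P (x * y).
    apply/(hR P PP) => M MM PM.
    case: (key M MM PM) => h.
      have := Ix (exist _ M (conj MM (conj PM h))) => /= Mx.
      have [[_ _ Mm] _ _] := MM.
      rewrite mulrC; exact: Mm.
    have := Iy (exist _ M (conj MM (conj PM h))) => /= My.
    have [[_ _ Mm] _ _] := MM.
    exact: Mm.
  by case/pr => [/nPx|/nPy].
  by left; apply: (ext_mono hA); apply: inInt.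
by right; apply: (ext_mono hB); apply: inInt.
Qed.
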